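(* Let $q,m,p\ge1$ and let $\mathcal{L}:\mathbb{R}^q\to\mathbb{R}$ be differentiable with $L_{\mathrm{sm}}$-Lipschitz gradient, i.e. $\|\nabla\mathcal{L}(\omega)-\nabla\mathcal{L}(\omega')\|\le L_{\mathrm{sm}}\|\omega-\omega'\|$ for all $\omega,\omega'$, and bounded below by $\mathcal{L}^\ast:=\inf\mathcal{L}>-\infty$. Let $\eta\in(0,1/L_{\mathrm{sm}}]$, $K\ge1$, $\omega^{(0)}\in\mathbb{R}^q$, and $\omega^{(k+1)}=\omega^{(k)}-\eta\nabla\mathcal{L}(\omega^{(k)})$ for $k=0,\dots,K-1$. Let $\Phi:\mathbb{R}^q\to\mathbb{R}^{m\times p}$ satisfy $\|\Phi(\omega)-\Phi(\omega')\|\le G\|\omega-\omega'\|$ for all $\omega,\omega'$. Let $u^\ast\in\mathbb{R}^m$, $\lambda\ge0$, and define \[ E_{\mathrm{proj}}(\omega):=\big\|\big(I_m-\Phi(\omega)(\Phi(\omega)^\top\Phi(\omega)+\lambda I_p)^{-1}\Phi(\omega)^\top\big)u^\ast\big\|_2,\qquad E_k:=E_{\mathrm{proj}}(\omega^{(k)}). \] Assume either $\lambda>0$, or $\lambda=0$ and $\sigma_{\min}(\Phi(\omega^{(k)}))\ge\gamma>0$ for all $0\le k\le K$. Then there is a constant $C_{\mathrm{cond}}\ge1$, depending only on $\lambda$ (resp. $\gamma$), on $\max_{0\le k\le K}\|\Phi(\omega^{(k)})\|$ and on $\|u^\ast\|_2$, such that \[ E_K\le E_0+C_{\mathrm{cond}}\sum_{k=0}^{K-1}\big\|\Phi(\omega^{(k+1)})-\Phi(\omega^{(k)})\big\|\le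 E_0+C_{\mathrm{cond}}\,G\sum_{k=0}^{K-1}\big\|\omega^{(k+1)}-\omega^{(k)}\big\|, \] and moreover \[ E_K\le E_0+C_{\mathrm{cond}}\,G\,\sqrt{K}\Big(\sum_{k=0}^{K-1}\big\|\omega^{(k+1)}-\omega^{(k)}\big\|^2\Big)^{1/2}. \]
   Context: $\|\cdot\|$ is the Euclidean norm on vectors and the spectral norm on matrices; $\sigma_{\min}$ is the smallest of the $p$ singular values. $\omega$ are the parameters of a network up to its penultimate layer and $\Phi(\omega)$ is the design matrix of penultimate-layer features; when $\lambda=0$ (full column rank), $E_{\mathrm{proj}}(\omega)=\min_{\theta}\|\Phi(\omega)\theta-u^\ast\|_2$ is the best least-squares fit of the target $u^\ast$ by a linear last-layer head. *)

(* Defs.v *)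
From HB Require Import structures.
From mathcomp Require Import all_boot all_order all_algebra.
From mathcomp Require Import all_classical all_reals all_analysis.
Set Implicit Arguments. Unset Strict Implicit. Unset Printing Implicit Defensive.
Import Order.TTheory GRing.Theory Num.Theory.
Import numFieldNormedType.Exports.
Local Open Scope classical_set_scope.
Local Open Scope ring_scope.

Definition eucl {R : realType} {n : nat} (v : 'cV[R]_n) : R :=
  Num.sqrt (\sum_(i < n) v i ord0 ^+ 2).

Definition dotv {R : realType} {n : nat} (v w : 'cV[R]_n) : R :=
  \sum_(i < n) v i ord0 * w i ord0.

Definition specnorm {R : realType} {m p : nat} (A : 'M[R]_(m, p)) : R :=
  sup [set eucl (A *m x) | x in [set x : 'cV[R]_p | eucl x = 1]].

(* Smallest of the p singular values of A (m x p), via its variational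
   characterization: min over unit vectors x of |A x|_2. *)
Definition sigma_min {R : realType} {m p : nat} (A : 'M[R]_(m, p)) : R :=
  inf [set eucl (A *m x) | x in [set x : 'cV[R]_p | eucl x = 1]].

Definition Eproj {R : realType} {q m p : nat} (Phi : 'cV[R]_q -> 'M[R]_(m, p))
  (lam : R) (ustar : 'cV[R]_m) (w : 'cV[R]_q) : R :=
  eucl ((1%:M - Phi w *m invmx ((Phi w)^T *m Phi w + lam%:M) *m (Phi w)^T)
        *m ustar).

Definition proj_bounds {R : realType} {q m p : nat}
  (Phi : 'cV[R]_q -> 'M[R]_(m, p)) (lam : R) (ustar : 'cV[R]_m)
  (G : R) (K : nat) (w : nat -> 'cV[R]_q) (C : R) : Prop :=
  let E k := Eproj Phi lam ustar (w k) in
  [/\ E K <= E 0%N + C * \sum_(k < K) specnorm (Phi (w k.+1) - Phi (w k)),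
      E 0%N + C * \sum_(k < K) specnorm (Phi (w k.+1) - Phi (w k))
        <= E 0%N + C * G * \sum_(k < K) eucl (w k.+1 - w k)
    & E K <= E 0%N + C * G * Num.sqrt (K%:R)
                * Num.sqrt (\sum_(k < K) eucl (w k.+1 - w k) ^+ 2)].

(* Main.v *)
Require Import Defs.
From HB Require Import structures.
From mathcomp Require Import all_boot all_order all_algebra.
From mathcomp Require Import all_classical all_reals all_analysis.
From mathcomp Require Import lra.
Import Order.TTheory GRing.Theory Num.Theory.
Import numFieldNormedType.Exports.
Set Implicit Arguments. Unset Strict Implicit. Unset Printing Implicit Defensive.
Local Open Scope classical_set_scope.
Local Open Scope ring_scope.

Lemma dotvC (R : realType) n (v w : 'cV[R]_n) : dotv v w = dotv w v.
Proof. by apply: eq_bigr => i _; rewrite mulrC. Qed.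

Lemma dotvDr (R : realType) n (u v w : 'cV[R]_n) :
  dotv u (v + w) = dotv u v + dotv u w.
Proof. by rewrite /dotv -big_split; apply: eq_bigr => i _; rewrite !mxE mulrDr. Qed.

Lemma dotvDl (R : realType) n (u v w : 'cV[R]_n) :
  dotv (v + w) u = dotv v u + dotv w u.
Proof. by rewrite dotvC dotvDr !(dotvC u). Qed.

Lemma dotvZr (R : realType) n (a : R) (v w : 'cV[R]_n) :
  dotv v (a *: w) = a * dotv v w.
Proof. by rewrite /dotv mulr_sumr; apply: eq_bigr => i _; rewrite !mxE mulrCA. Qed.

Lemma dotvZl (R : realType) n (a : R) (v w : 'cV[R]_n) :
  dotv (a *: v) w = a * dotv v w.
Proof. by rewrite dotvC dotvZr dotvC. Qed.

Lemma dotvNr (R : realType) n (v w : 'cV[R]_n) : dotv v (- w) = - dotv v w.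
Proof. by rewrite -scaleN1r dotvZr mulN1r. Qed.

Lemma dotvNl (R : realType) n (v w : 'cV[R]_n) : dotv (- v) w = - dotv v w.
Proof. by rewrite dotvC dotvNr dotvC. Qed.

Lemma dotvv_ge0 (R : realType) n (v : 'cV[R]_n) : 0 <= dotv v v.
Proof. by apply: sumr_ge0 => i _; by rewrite -expr2 sqr_ge0. Qed.

Lemma eucl_ge0 (R : realType) n (v : 'cV[R]_n) : 0 <= eucl v.
Proof. exact: sqrtr_ge0. Qed.

Lemma dotvv (R : realType) n (v : 'cV[R]_n) : dotv v v = eucl v ^+ 2.
Proof.
rewrite /eucl sqr_sqrtr; last by apply: sumr_ge0 => i _; exact: sqr_ge0.
by apply: eq_bigr => i _; rewrite expr2.
Qed.

Lemma dotvv_eq0 (R : realType) n (v : 'cV[R]_n) : dotv v v = 0 -> v = 0.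
Proof.
move=> h; apply/matrixP => i j; rewrite ord1 mxE.
have := psumr_eq0P (fun i (_ : true) => (ltac:(by rewrite -expr2 sqr_ge0) : 0 <= v i ord0 * v i ord0)) h.
by move=> /(_ i isT) /eqP; rewrite mulf_eq0 orbb => /eqP.
Qed.

Lemma eucl_eq0 (R : realType) n (v : 'cV[R]_n) : eucl v = 0 -> v = 0.
Proof. by move=> h; apply: dotvv_eq0; rewrite dotvv h expr0n. Qed.

Lemma CS2 (R : realType) n (v w : 'cV[R]_n) :
  dotv v w ^+ 2 <= dotv v v * dotv w w.
Proof.
set t := dotv v w; set s := dotv w w.
have hs : 0 <= s by exact: dotvv_ge0.
have [s0|spos] := eqVneq s 0.
  have w0 := dotvv_eq0 s0.
  have -> : t = 0 by rewrite /t w0 /dotv big1 // => i _; rewrite mxE mulr0.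
  by rewrite expr0n /= mulr_ge0 // dotvv_ge0.
have hq := dotvv_ge0 (s *: v - t *: w).
rewrite !dotvDl !dotvDr !dotvNl !dotvNr !dotvZl !dotvZr in hq.
rewrite -/s -/t (dotvC w v) -/t in hq.
have sp : 0 < s by rewrite lt_def spos hs.
nra.
Qed.

Lemma CS (R : realType) n (v w : 'cV[R]_n) : `|dotv v w| <= eucl v * eucl w.
Proof.
have := CS2 v w; rewrite !dotvv => h.
have h1 := eucl_ge0 v; have h2 := eucl_ge0 w.
have : `|dotv v w| ^+ 2 <= (eucl v * eucl w) ^+ 2.
  by rewrite real_normK ?num_real // exprMn.
move=> h3; have h4 := normr_ge0 (dotv v w); have hb := mulr_ge0 h1 h2; move: h3 h4 hb; move: (`|dotv v w|) (eucl v * eucl w) => a b; nra.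
Qed.

Lemma eucl_tri (R : realType) n (v w : 'cV[R]_n) : eucl (v + w) <= eucl v + eucl w.
Proof.
have h := CS v w; have h0 := ler_norm (dotv v w).
have : eucl (v + w) ^+ 2 <= (eucl v + eucl w) ^+ 2.
  rewrite -dotvv !dotvDl !dotvDr !dotvv (dotvC w v); nra.
have := eucl_ge0 v; have := eucl_ge0 w; have := eucl_ge0 (v + w); nra.
Qed.

Lemma euclZ (R : realType) n (a : R) (v : 'cV[R]_n) : eucl (a *: v) = `|a| * eucl v.
Proof.
rewrite /eucl -sqrtr_sqr -sqrtrM ?sqr_ge0 // mulr_sumr; congr Num.sqrt.
by apply: eq_bigr => i _; rewrite mxE exprMn.
Qed.

Lemma euclN (R : realType) n (v : 'cV[R]_n) : eucl (- v) = eucl v.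
Proof. by rewrite -scaleN1r euclZ normrN1 mul1r. Qed.

Lemma eucl0 (R : realType) n : eucl (0 : 'cV[R]_n) = 0.
Proof. by rewrite /eucl big1 ?sqrtr0 // => i _; rewrite mxE expr0n. Qed.

Lemma dotv_mul (R : realType) m n (A : 'M[R]_(m, n)) v w :
  dotv v (A *m w) = dotv (A^T *m v) w.
Proof.
rewrite /dotv; under eq_bigr do rewrite mxE mulr_sumr.
rewrite exchange_big; apply: eq_bigr => j _; rewrite !mxE mulr_suml.
by apply: eq_bigr => i _; rewrite !mxE mulrCA mulrA.
Qed.

Definition fro (R : realType) m n (B : 'M[R]_(m, n)) : R :=
  Num.sqrt (\sum_i dotv (\col_j B i j) (\col_j B i j)).

Lemma fro_bound (R : realType) m n (B : 'M[R]_(m, n)) x :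
  eucl (B *m x) <= fro B * eucl x.
Proof.
rewrite /eucl /fro -sqrtrM; last by apply: sumr_ge0 => i _; exact: dotvv_ge0.
rewrite ler_sqrt; last by apply: mulr_ge0; apply: sumr_ge0 => i _;
  [exact: dotvv_ge0| rewrite sqr_ge0].
have -> : \sum_(i < n) x i ord0 ^+ 2 = dotv x x by apply: eq_bigr => i _; rewrite expr2.
rewrite mulr_suml; apply: ler_sum => i _.
have -> : (B *m x) i ord0 = dotv (\col_j B i j) x.
  by rewrite mxE; apply: eq_bigr => j _; rewrite mxE.
exact: CS2.
Qed.

Lemma specnorm_bound (R : realType) m n (B : 'M[R]_(m, n)) x :
  eucl (B *m x) <= specnorm B * eucl x.
Proof.
have [e0|enz] := eqVneq (eucl x) 0.
  by rewrite e0 mulr0 (eucl_eq0 e0) mulmx0 eucl0.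
have epos : 0 < eucl x by rewrite lt_def enz eucl_ge0.
set y := (eucl x)^-1 *: x.
have ey : eucl y = 1 by rewrite euclZ ger0_norm ?invr_ge0 ?eucl_ge0 // mulVf.
have hub : has_ubound [set eucl (B *m x) | x in [set x : 'cV[R]_n | eucl x = 1]].
  exists (fro B) => _ [z /= hz <-]; have := fro_bound B z; by rewrite hz mulr1.
have := ub_le_sup hub (ex_intro2 _ _ y ey erefl).
rewrite -/(specnorm B) /y -scalemxAr euclZ ger0_norm ?invr_ge0 ?eucl_ge0 //.
move=> h; have := ler_wpM2l (eucl_ge0 x) h.
by rewrite mulrA mulfV // mul1r mulrC.
Qed.

Lemma specnorm_ge0 (R : realType) m n (B : 'M[R]_(m, n)) :
  (0 < n)%N -> 0 <= specnorm B.
Proof.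
move=> n0; have := specnorm_bound B (const_mx 1).
have ep : 0 < eucl (const_mx 1 : 'cV[R]_n).
  rewrite /eucl sqrtr_gt0 (eq_bigr (fun _ => 1)) => [|i _]; last by rewrite mxE expr1n.
  by rewrite sumr_const card_ord ltr0n.
have := eucl_ge0 (B *m const_mx 1); move: ep.
move: (eucl _) (eucl _) => a b; nra.
Qed.

Lemma specnorm_tr (R : realType) m n (B : 'M[R]_(m, n)) y :
  (0 < n)%N -> eucl (B^T *m y) <= specnorm B * eucl y.
Proof.
move=> n0; set z := B^T *m y.
have h : eucl z ^+ 2 <= eucl y * (specnorm B * eucl z).
  rewrite -dotvv {1}/z -dotv_mul.
  apply: le_trans (ler_norm _) _; apply: le_trans (CS _ _) _.
  by apply: ler_wpM2l; [exact: eucl_ge0 | exact: specnorm_bound].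
have := specnorm_ge0 B n0; have := eucl_ge0 y; have := eucl_ge0 z.
move: h; move: (eucl z) (eucl y) (specnorm B) => a b c h ha hb hc.
rewrite leNgt; apply/negP => hlt.
have apos : 0 < a by apply: le_lt_trans hlt; exact: mulr_ge0.
nra.
Qed.

Lemma sigma_min_bound (R : realType) m n (B : 'M[R]_(m, n)) (g : R) x :
  g <= sigma_min B -> g * eucl x <= eucl (B *m x).
Proof.
move=> hg.
have [e0|enz] := eqVneq (eucl x) 0.
  by rewrite e0 mulr0 eucl_ge0.
have epos : 0 < eucl x by rewrite lt_def enz eucl_ge0.
set y := (eucl x)^-1 *: x.
have ey : eucl y = 1 by rewrite euclZ ger0_norm ?invr_ge0 ?eucl_ge0 // mulVf.
have hlb : has_lbound [set eucl (B *m x) | x in [set x : 'cV[R]_n | eucl x = 1]].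
  by exists 0 => _ [z /= hz <-]; exact: eucl_ge0.
have := ge_inf hlb (ex_intro2 _ _ y ey erefl).
rewrite -/(sigma_min B) /y -scalemxAr euclZ ger0_norm ?invr_ge0 ?eucl_ge0 //.
move=> h; have := le_trans hg h; move=> /(ler_wpM2l (eucl_ge0 x)).
by rewrite mulrA mulfV // mul1r mulrC.
Qed.

Lemma inv_bound (R : realType) n (A : 'M[R]_n) (c : R) :
  0 < c -> (forall x, c * eucl x ^+ 2 <= dotv x (A *m x)) ->
  A \in unitmx /\ forall y, eucl (invmx A *m y) <= c^-1 * eucl y.
Proof.
move=> cp hA.
have hx : forall x, c * eucl x <= eucl (A *m x).
  move=> x; have h := hA x; have h2 := le_trans (ler_norm _) (CS x (A *m x)).
  have := le_trans h h2; have := eucl_ge0 x; have := eucl_ge0 (A *m x).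
  move: (eucl x) (eucl (A *m x)) => a b hb ha hh.
  rewrite leNgt; apply/negP => hlt.
  have apos : 0 < a.
    rewrite lt_def; apply/andP; split=> //; apply/negP => /eqP a0.
    by move: hlt; rewrite a0 mulr0 ltNge hb.
  nra.
have uA : A \in unitmx.
  rewrite unitmxE unitfE -det_tr; apply/negP => /det0P [v vnz hv].
  have : A *m v^T = 0 by rewrite -[A]trmxK -trmx_mul hv trmx0.
  move=> h; have := hx v^T; rewrite h eucl0 => h'.
  have : eucl v^T = 0.
    have := eucl_ge0 v^T; move: h'; move: (eucl v^T) => a h1 h2; nra.
  move=> /eucl_eq0 /eqP; rewrite -[0]trmx0 (inj_eq trmx_inj) (negbTE vnz) //.
split=> // y; have := hx (invmx A *m y); rewrite mulKVmx //.
move=> h; have := ler_wpM2l (ltW (ltac:(by rewrite invr_gt0) : 0 < c^-1)) h.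
by rewrite mulrA mulVf ?mul1r // gt_eqF.
Qed.

Lemma zid (V : zmodType) (x1 x2 x3 L zu : V) :
  x1 + L - zu = -(x2 - x1) - (x3 - x2) + (x3 + L - zu).
Proof. by rewrite !opprB !addrA !subrK. Qed.

Lemma step (R : realType) m p (F F' : 'M[R]_(m, p)) (A A' : 'M[R]_p)
  (lam beta M d : R) (u : 'cV[R]_m) :
  A = F^T *m F + lam%:M -> A' = F'^T *m F' + lam%:M ->
  A \in unitmx -> A' \in unitmx ->
  (forall y, eucl (invmx A *m y) <= beta * eucl y) ->
  (forall y, eucl (invmx A' *m y) <= beta * eucl y) ->
  (forall x, eucl (F *m x) <= M * eucl x) ->
  (forall x, eucl (F'^T *m x) <= M * eucl x) ->
  (forall x, eucl ((F' - F) *m x) <= d * eucl x) ->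
  (forall y, eucl ((F' - F)^T *m y) <= d * eucl y) ->
  0 <= beta -> 0 <= M -> 0 <= d ->
  eucl ((1%:M - F' *m invmx A' *m F'^T) *m u) <=
  eucl ((1%:M - F *m invmx A *m F^T) *m u)
  + (2 * M * beta + 2 * M ^+ 3 * beta ^+ 2) * d * eucl u.
Proof.
move=> eA eA' uA uA' hi hi' hF hF'T hD hDT hb hM hd.
set z := F^T *m u; set z' := F'^T *m u.
set a := invmx A *m z; set a' := invmx A' *m z'.
have e1 : (1%:M - F *m invmx A *m F^T) *m u = u - F *m a.
  by rewrite mulmxBl mul1mx /a /z !mulmxA.
have e1' : (1%:M - F' *m invmx A' *m F'^T) *m u = u - F' *m a'.
  by rewrite mulmxBl mul1mx /a' /z' !mulmxA.
rewrite e1 e1'.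
set D := F' *m a' - F *m a.
have -> : u - F' *m a' = (u - F *m a) - D by rewrite /D opprB addrA subrK.
apply: le_trans (eucl_tri _ _) _; rewrite euclN lerD2l.
have eD2 : D = (F' - F) *m a' + F *m (a' - a).
  by rewrite mulmxBl mulmxBr addrA subrK.
have ea' : eucl a' <= beta * (M * eucl u).
  apply: le_trans (hi' z') _; apply: (ler_wpM2l hb); exact: hF'T.
have hAa : A *m (a' - a) =
    - ((F' - F)^T *m (F *m a')) - F'^T *m ((F' - F) *m a') + (F' - F)^T *m u.
  have Az : A *m a = z by rewrite /a mulKVmx.
  have Az' : A' *m a' = z' by rewrite /a' mulKVmx.
  rewrite mulmxBr Az.
  have -> : (F' - F)^T *m u = z' - z by rewrite linearB /= mulmxBl.
  rewrite -{1}Az' eA eA' !mulmxDl -!mulmxA !linearB /= !mulmxBl mulmxDr ?mulmxN ?mulNmx ?mulmxN.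
  exact: zid.
have hd' : a' - a = invmx A *m (A *m (a' - a)) by rewrite mulKmx.
have eAa : eucl (A *m (a' - a)) <= d * (M * eucl a') + M * (d * eucl a') + d * eucl u.
  rewrite hAa; apply: le_trans (eucl_tri _ _) _; apply: lerD; last exact: hDT.
  apply: le_trans (eucl_tri _ _) _; rewrite !euclN; apply: lerD.
    by apply: le_trans (hDT _) _; apply: ler_wpM2l => //; exact: hF.
  by apply: le_trans (hF'T _) _; apply: ler_wpM2l => //; exact: hD.
have ed : eucl (a' - a) <= beta * (d * (M * eucl a') + M * (d * eucl a') + d * eucl u).
  rewrite hd'; apply: le_trans (hi _) _; by rewrite ler_wpM2l.
have eD : eucl D <= d * eucl a' + M * eucl (a' - a).
  rewrite eD2; apply: le_trans (eucl_tri _ _) _; apply: lerD; [exact: hD|exact: hF].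
have k1 := ler_wpM2l hM ed.
have hc : 0 <= d * (1 + 2 * M ^+ 2 * beta).
  by apply: mulr_ge0 => //; apply: addr_ge0 => //; rewrite !mulr_ge0 // exprn_ge0.
have k2 := ler_wpM2l hc ea'.
have := eucl_ge0 u; have := eucl_ge0 a'; have := eucl_ge0 (a' - a).
move: k1 k2 eD; move: (eucl D) (eucl (a' - a)) (eucl a') (eucl u) => x1 x2 x3 x4.
move=> *; nra.
Qed.

Lemma eucl_ones (R : realType) n : eucl (const_mx 1 : 'cV[R]_n) = Num.sqrt n%:R.
Proof.
rewrite /eucl (eq_bigr (fun _ => 1)) => [|i _]; last by rewrite mxE expr1n.
by rewrite sumr_const card_ord.
Qed.

Lemma sum_CS (R : realType) K (e : 'I_K -> R) :
  \sum_k e k <= Num.sqrt K%:R * Num.sqrt (\sum_k e k ^+ 2).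
Proof.
have h := CS (const_mx 1 : 'cV[R]_K) (\col_k e k).
rewrite eucl_ones in h.
have -> : \sum_k e k = dotv (const_mx 1 : 'cV[R]_K) (\col_k e k).
  by apply: eq_bigr => k _; rewrite !mxE mul1r.
have -> : Num.sqrt (\sum_k e k ^+ 2) = eucl (\col_k e k).
  by rewrite /eucl; congr Num.sqrt; apply: eq_bigr => k _; rewrite mxE.
exact: le_trans (ler_norm _) h.
Qed.

Lemma quad (R : realType) m p (F : 'M[R]_(m, p)) (lam : R) x :
  dotv x ((F^T *m F + lam%:M) *m x) = eucl (F *m x) ^+ 2 + lam * eucl x ^+ 2.
Proof.
by rewrite mulmxDl dotvDr -mulmxA dotv_mul trmxK dotvv mul_scalar_mx dotvZr dotvv.
Qed.

Definition Cf (R : realType) (beta M c : R) : R :=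
  1 + (2 * `|M| * `|beta| + 2 * `|M| ^+ 3 * beta ^+ 2) * `|c|.

Lemma Cf_ge1 (R : realType) (beta M c : R) : 1 <= Cf beta M c.
Proof.
have h1 := normr_ge0 M; have h2 := normr_ge0 beta; have h3 := sqr_ge0 beta.
rewrite /Cf lerDl; apply: mulr_ge0 => //; apply: addr_ge0; apply: mulr_ge0 => //.
all: try by apply: mulr_ge0 => //; exact: exprn_ge0.
Qed.

Lemma main_gen (R : realType) q m p (Phi : 'cV[R]_q -> 'M[R]_(m, p)) (lam : R)
  (ustar : 'cV[R]_m) (G : R) (K : nat) (w : nat -> 'cV[R]_q) (beta M : R) :
  (0 < q)%N -> (0 < p)%N ->
  (forall w1 w2, specnorm (Phi w1 - Phi w2) <= G * eucl (w1 - w2)) ->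
  0 <= beta -> 0 <= M ->
  (forall k, (k <= K)%N -> specnorm (Phi (w k)) <= M) ->
  (forall k, (k <= K)%N ->
     ((Phi (w k))^T *m Phi (w k) + lam%:M) \in unitmx /\
     forall y, eucl (invmx ((Phi (w k))^T *m Phi (w k) + lam%:M) *m y) <= beta * eucl y) ->
  proj_bounds Phi lam ustar G K w (Cf beta M (eucl ustar)).
Proof.
move=> hq hp hG hb hM hPM hinv.
set C := Cf beta M (eucl ustar).
have hC : C = 1 + (2 * M * beta + 2 * M ^+ 3 * beta ^+ 2) * eucl ustar.
  by rewrite /C /Cf !ger0_norm // eucl_ge0.
have C0 : 0 <= C by apply: le_trans (Cf_ge1 _ _ _); rewrite ler01.
set E := fun k => Eproj Phi lam ustar (w k).
set d := fun k => specnorm (Phi (w k.+1) - Phi (w k)).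
have d0 : forall k, 0 <= d k by move=> k; exact: specnorm_ge0.
have stepk : forall k, (k < K)%N -> E k.+1 <= E k + C * d k.
  move=> k hk.
  have [u1 i1] := hinv k (ltnW hk).
  have [u2 i2] := hinv k.+1 hk.
  have := @step R m p (Phi (w k)) (Phi (w k.+1)) _ _ lam beta M (d k) ustar
    erefl erefl u1 u2 i1 i2.
  have hF : forall x, eucl (Phi (w k) *m x) <= M * eucl x.
    move=> x; apply: le_trans (specnorm_bound _ _) _.
    by apply: ler_wpM2r; [exact: eucl_ge0 | exact: hPM (ltnW hk)].
  have hF'T : forall x, eucl ((Phi (w k.+1))^T *m x) <= M * eucl x.
    move=> x; apply: le_trans (specnorm_tr _ _ hp) _.
    by apply: ler_wpM2r; [exact: eucl_ge0 | exact: hPM hk].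
  move=> /(_ hF hF'T (fun x => specnorm_bound _ x) (fun y => specnorm_tr _ y hp) hb hM (d0 k)).
  rewrite /E /Eproj => h; apply: le_trans h _; rewrite lerD2l hC.
  have := d0 k; have := eucl_ge0 ustar; move: (d k) (eucl ustar) => x y hx hy.
  have : 0 <= (2 * M * beta + 2 * M ^+ 3 * beta ^+ 2) by
    rewrite addr_ge0 // ?mulr_ge0 // exprn_ge0.
  move: (2 * M * beta + 2 * M ^+ 3 * beta ^+ 2) => c hc; nra.
have b1 : forall n, (n <= K)%N -> E n <= E 0%N + C * \sum_(k < n) d k.
  elim=> [|n IH] hn; first by rewrite big_ord0 mulr0 addr0.
  rewrite big_ord_recr /= mulrDr addrA.
  apply: le_trans (stepk n hn) _; rewrite lerD2r; exact: IH (ltnW hn).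
have G0 : 0 <= G.
  have := hG (const_mx 1) 0; rewrite subr0 eucl_ones.
  have := specnorm_ge0 (Phi (const_mx 1) - Phi 0) hp.
  have : 0 < Num.sqrt q%:R :> R by rewrite sqrtr_gt0 ltr0n.
  move: (specnorm _) (Num.sqrt _) => a s hs ha h; nra.
have b2 : C * \sum_(k < K) d k <= C * G * \sum_(k < K) eucl (w k.+1 - w k).
  rewrite -mulrA; apply: ler_wpM2l => //; rewrite mulr_sumr; apply: ler_sum => k _.
  exact: hG.
rewrite /proj_bounds /=; split.
- exact: b1.
- by rewrite lerD2l.
- apply: le_trans (b1 K (leqnn K)) _.
  apply: (le_trans (_ : _ <= E 0%N + C * G * \sum_(k < K) eucl (w k.+1 - w k))).
    by rewrite lerD2l.
  rewrite lerD2l -!mulrA; apply: ler_wpM2l => //; apply: ler_wpM2l => //.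
  exact: (sum_CS (fun k : 'I_K => eucl (w k.+1 - w k))).
Qed.

Theorem theorem1 (R : realType) :
  exists Clam Cgam : R -> R -> R -> R,
    (forall a b c, 1 <= Clam a b c) /\ (forall a b c, 1 <= Cgam a b c) /\
  forall (q m p : nat), (0 < q)%N -> (0 < m)%N -> (0 < p)%N ->
  forall (L : 'cV[R]_q -> R) (gradL : 'cV[R]_q -> 'cV[R]_q) (Lsm : R),
    (forall w, differentiable L w) ->
    (forall w h, 'd L w h = dotv (gradL w) h) ->
    0 < Lsm ->
    (forall w w', eucl (gradL w - gradL w') <= Lsm * eucl (w - w')) ->
    (exists Lb : R, forall w, Lb <= L w) ->
  forall (eta : R) (K : nat) (w : nat -> 'cV[R]_q),
    0 < eta -> eta <= Lsm^-1 -> (1 <= K)%N ->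
    (forall k, (k < K)%N -> w k.+1 = w k - eta *: gradL (w k)) ->
  forall (Phi : 'cV[R]_q -> 'M[R]_(m, p)) (G : R),
    (forall w1 w2, specnorm (Phi w1 - Phi w2) <= G * eucl (w1 - w2)) ->
  forall (ustar : 'cV[R]_m) (lam gam : R), 0 <= lam ->
  let M := \big[Num.max/0]_(k < K.+1) specnorm (Phi (w k)) in
  (0 < lam -> proj_bounds Phi lam ustar G K w (Clam lam M (eucl ustar))) /\
  (lam = 0 -> 0 < gam -> (forall k, (k <= K)%N -> gam <= sigma_min (Phi (w k))) ->
     proj_bounds Phi lam ustar G K w (Cgam gam M (eucl ustar))).
Proof.
exists (fun a b c => Cf a^-1 b c), (fun a b c => Cf (a ^+ 2)^-1 b c).
split; first by move=> *; exact: Cf_ge1.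
split; first by move=> *; exact: Cf_ge1.
move=> q m p hq hm hp L gradL Lsm _ _ _ _ _ eta K w _ _ _ _ Phi G hG ustar lam gam hlam M.
have hPM : forall k, (k <= K)%N -> specnorm (Phi (w k)) <= M.
  move=> k hk; rewrite /M.
  exact: (le_bigmax 0 (fun k : 'I_K.+1 => specnorm (Phi (w k))) (Ordinal (hk : (k < K.+1)%N))).
have M0 : 0 <= M by apply: le_trans (hPM 0%N (leq0n K)); exact: specnorm_ge0.
split.
- move=> lpos; apply: main_gen => //; first by rewrite invr_ge0 ltW.
  move=> k hk; apply: inv_bound => // x.
  rewrite quad lerDr; exact: sqr_ge0.
- move=> l0 gpos hs; apply: main_gen => //; first by rewrite invr_ge0 sqr_ge0.
  move=> k hk; apply: inv_bound; first by rewrite exprn_gt0.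
  move=> x; rewrite quad l0 mul0r addr0.
  have h := sigma_min_bound x (hs k hk).
  have ha := eucl_ge0 x; move: h ha.
  move: (eucl x) (eucl (Phi (w k) *m x)) => a b h ha.
  have h0 : 0 <= gam * a by apply: mulr_ge0 => //; exact: ltW.
  have hb := le_trans h0 h.
  rewrite -exprMn; move: h0 hb h; move: (gam * a) => c; nra.
Qed.
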